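(* Let $\mathscr P=(P,G_P)$ and $\mathscr Q=(Q,G_Q)$ be causal graphical models over $\mathbf X=(X_1,\dots,X_d)$ such that $G_P$ and $G_Q$ have the same skeleton, and let $X_i\to X_j$ be an edge of $G_Q$ such that $X_j\to X_i$ is an edge of $G_P$ (a flipped edge). Let $P^e$ be an interventional distribution generated from $\mathscr P$ with target set $\mathcal I_e$. (i) If there exists an unblocked path $e\overset{G_P}{\to}X_i$ given $\mathbf{PA}_j^{G_Q}\setminus\{X_i\}$, then $P^e(X_j\mid\mathbf{PA}_j^{G_Q})\neq P(X_j\mid\mathbf{PA}_j^{G_Q})$. (ii) If there exists an unblocked path $e\overset{G_P}{\to}X_j$ given $\mathbf{PA}_i^{G_Q}$, then $P^e(X_i\mid\mathbf{PA}_i^{G_Q})\neq P(X_i\mid\mathbf{PA}_i^{G_Q})$.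
   Context: All distributions have densities with respect to Lebesgue measure; $[d]=\{1,\dots,d\}$. A causal graphical model (CGM) is a pair $(P,G)$ of a distribution over $\mathbf X$ and a DAG on $[d]$ with $P$ Markovian w.r.t. $G$ ($P(\mathbf X)=\prod_iP(X_i\mid\mathbf{PA}_i^G)$, $\mathbf{PA}_i^G$ = parents of $X_i$ in $G$). Interventional distributions: environment $e$ has target set $\mathcal I_e\subseteq[d]$ and $P^e(\mathbf X)=\prod_{i\in\mathcal I_e}\tilde P(X_i\mid\mathbf{PA}_i^{G_P})\prod_{i\notin\mathcal I_e}P(X_i\mid\mathbf{PA}_i^{G_P})$, with $P^e(X_i\mid\mathbf{PA}_i^{G_P})=P(X_i\mid\mathbf{PA}_i^{G_P})$ iff $i\notin\mathcal I_e$; mechanisms are independent causal mechanisms and pseudo causal sufficiency holds (unobserved confounders are fixed within each environment). Standing faithfulness assumption: $P$ is faithful to $G_P$, and the multi-environment distribution is faithful to the augmented DAG obtained from $G_P$ by adding an environment node $e$ with edges $e\to X_k$ for all $k\in\mathcal I_e$, so that $P^e(X\mid\mathbf Z)\ne P(X\mid\mathbf Z)$ whenever $e$ and $X$ are d-connected given $\mathbf Z$ in that augmented DAG. Unblocked path: for a DAG $G$ over $\mathbf X$ and $\mathbf Z\subseteq\mathbf X$, there is a (directed) unblocked path $e\overset{G}{\to}X_i$ given $\mathbf Z$ if there exist $k\in\mathcal I_e$ and a directed path $X_k\to\cdots\to X_i$ in $G$ none of whose vertices lies in $\mathbf Z$; if $k=i$ this condition is trivially satisfied. *)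

(* Defs.v *)
From HB Require Import structures.
From mathcomp Require Import all_boot all_order all_algebra.
From mathcomp Require Import all_classical all_reals all_analysis.
Set Implicit Arguments. Unset Strict Implicit. Unset Printing Implicit Defensive.
Import Order.TTheory GRing.Theory Num.Theory.
Local Open Scope ring_scope.

Section Graphs.
Variable T : finType.

Definition adjr (g : rel T) : rel T := fun u v => g u v || g v u.

Definition acyclic (g : rel T) : Prop := forall u v, g u v -> ~~ connect g v u.

(* d-connection of x and y given Z in the DAG g: there is a simple path
   x = w_0 - w_1 - ... - w_n = y (edges in any direction) whose endpoints are
   not in Z, such that every collider w_k (w_{k-1} -> w_k <- w_{k+1}) has a
   descendant (possibly itself) in Z, and every non-collider is not in Z. *)
Definition d_connecting_path (g : rel T) (Z : {set T}) (x y : T) (s : seq T) : bool :=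
  let w := x :: s in
  [&& uniq w, path (adjr g) x s, last x s == y, x \notin Z, y \notin Z &
      all (fun k =>
             let a := nth x w k in let b := nth x w k.+1 in let c := nth x w k.+2 in
             if g a b && g c b then [exists z, (z \in Z) && connect g b z]
             else b \notin Z)
          (iota 0 (size w - 2))].

Definition d_connected (g : rel T) (Z : {set T}) (x y : T) : Prop :=
  exists s : seq T, d_connecting_path g Z x y s.

Definition d_separated (g : rel T) (A B Z : {set T}) : Prop :=
  forall a b, a \in A -> b \in B -> ~ d_connected g Z a b.

End Graphs.

Definition pa d (G : rel 'I_d) (j : 'I_d) : {set 'I_d} := [set k | G k j].

(* augmented DAG: vertex None is the environment node e, with edges
   e -> X_k for k in the target set I; Some k is X_k. *)
Definition aug d (G : rel 'I_d) (I : {set 'I_d}) : rel (option 'I_d) :=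
  fun u v => match u, v with
             | Some a, Some b => G a b
             | None, Some b => b \in I
             | _, _ => false
             end.

Definition unblocked d (G : rel 'I_d) (I : {set 'I_d}) (Z : {set 'I_d}) (i : 'I_d) : Prop :=
  exists2 k, k \in I &
    (k = i \/ exists s : seq 'I_d,
        [&& path G k s, last k s == i & all (fun v => v \notin Z) (k :: s)]).

Section Densities.
Variables (R : realType) (d : nat).
Local Notation vec := ('I_d -> R).

Definition upd (x : vec) (k : 'I_d) (t : R) : vec :=
  fun j => if j == k then t else x j.

Definition marg1 (k : 'I_d) (f : vec -> R) : vec -> R :=
  fun x => fine (\int[@lebesgue_measure R]_t (f (upd x k t))%:E).

Definition margS (S : {set 'I_d}) (p : vec -> R) : vec -> R :=
  foldr (fun k g => marg1 k g) p (enum (~: S)).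

Definition cond (p : vec -> R) (i : 'I_d) (Z : {set 'I_d}) : vec -> R :=
  fun x => margS (i |: Z) p x / margS Z p x.

Definition cond_differs (p' p : vec -> R) (i : 'I_d) (Z : {set 'I_d}) : Prop :=
  exists x : vec, [/\ 0 < margS Z p x, 0 < margS Z p' x & cond p' i Z x != cond p i Z x].

Definition cond_indep (p : vec -> R) (A B Z : {set 'I_d}) : Prop :=
  forall x : vec, margS (A :|: B :|: Z) p x * margS Z p x
                  = margS (A :|: Z) p x * margS (B :|: Z) p x.

Definition mechanisms (G : rel 'I_d) (f : 'I_d -> vec -> R) : Prop :=
  forall i,
    [/\ forall x y : vec, (forall j, (j == i) || G j i -> x j = y j) -> f i x = f i y,
        forall x, 0 <= f i x,
        forall x, measurable_fun setT (fun t => f i (upd x i t)) &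
        forall x, (\int[@lebesgue_measure R]_t (f i (upd x i t))%:E = 1)%E].

Definition joint (f : 'I_d -> vec -> R) : vec -> R := fun x => \prod_i f i x.

Definition intervene (f g : 'I_d -> vec -> R) (I : {set 'I_d}) : 'I_d -> vec -> R :=
  fun i => if i \in I then g i else f i.

End Densities.

(* Main.v *)
Require Import Defs.
From mathcomp Require Import all_boot all_order all_algebra.
From mathcomp Require Import all_classical all_reals all_analysis.
From mathcomp Require Import zify.
Set Implicit Arguments. Unset Strict Implicit.

Section Gen.
Variable T : finType.
Variable g : rel T.
Hypothesis anti : forall u v, g u v -> g v u -> False.

Lemma dir_dcp (Z : {set T}) x y s :
  path g x s -> uniq (x :: s) -> last x s = y ->
  (forall v, v \in x :: s -> v \notin Z) -> d_connecting_path g Z x y s.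
Proof.
move=> Hp Hu Hl HZ.
rewrite /d_connecting_path Hu (sub_path _ Hp) /=; last by move=> a b h; rewrite /adjr h.
rewrite Hl eqxx HZ ?mem_head //= -Hl.
rewrite HZ /=; last by rewrite mem_last.
apply/allP => k; rewrite mem_iota add0n => /andP[_ hk] /=.
have hk1 : k.+1 < size s by lia.
have gbc : g (nth x (x :: s) k.+1) (nth x (x :: s) k.+2).
  by apply: (pathP x Hp).
case: ifP => [/andP[_ hcb]|_]; first by case: (anti gbc hcb).
apply: HZ; rewrite inE mem_nth ?orbT //; exact: ltnW hk1.
Qed.

Lemma col_dcp (Z : {set T}) x y s :
  path g x s -> uniq (x :: rcons s y) -> x \notin Z -> y \notin Z ->
  last x s \in Z -> (forall v, v \in x :: s -> v != last x s -> v \notin Z) ->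
  g y (last x s) -> d_connecting_path g Z x y (rcons s y).
Proof.
move=> Hp Hu Hx Hy Hb HZ gyb.
have Hu' : uniq (x :: s) by move: Hu; rewrite -rcons_cons rcons_uniq => /andP[].
rewrite /d_connecting_path Hu rcons_path (sub_path _ Hp) /=; last by move=> a b h; rewrite /adjr h.
rewrite /adjr gyb orbT last_rcons eqxx Hx Hy /=.
have eb : nth x (x :: s) (size s) = last x s.
  by rewrite (_ : last x s = last x (x :: s)) // -nth_last.
have nth_in m : m < size s -> nth x (x :: s) m \notin Z.
  move=> hm; apply: HZ; first by apply: mem_nth => /=; lia.
  rewrite -eb (nth_uniq x _ _ Hu') /=; lia.
apply/allP => k; rewrite mem_iota add0n size_rcons => /andP[_ hk] /=.
have hk0 : k < size s by lia.
rewrite -rcons_cons !nth_rcons /=.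
have gab : g (nth x (x :: s) k) (nth x (x :: s) k.+1) by apply: (pathP x Hp).
case: (ltnP k.+1 (size s)) => hk1.
  have gbc : g (nth x (x :: s) k.+1) (nth x (x :: s) k.+2) by apply: (pathP x Hp).
  have -> : k < (size s).+1 by lia.
  rewrite hk0.
  case: ifP => [/andP[_ hcb]|_]; first by case: (anti gbc hcb).
  exact: (nth_in k.+1 hk1).
have ek : k.+1 = size s by lia.
have -> : k < (size s).+1 by lia.
rewrite hk0 -ek eqxx.
have eb' : nth x s k = last x s by rewrite -eb -ek.
have gab' : g (nth x (x :: s) k) (nth x s k) := gab.
rewrite eb' in gab'; rewrite eb' gyb andbT gab'.
by apply/existsP; exists (last x s); rewrite Hb connect0.
Qed.
End Gen.

Lemma conn_last (T : finType) (e : rel T) x p y :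
  path e x p -> y \in x :: p -> connect e y (last x p).
Proof.
elim: p x => [|z p IH] x /=.
  by move=> _; rewrite inE => /eqP ->; rewrite connect0.
case/andP=> exz hp; rewrite inE => /orP[/eqP ->|hy]; last exact: IH.
apply/connectP; exists (z :: p) => //=; by rewrite exz.
Qed.

Lemma prefix (T : finType) (e : rel T) x p y :
  path e x p -> y \in x :: p ->
  exists2 q, path e x q && (last x q == y) & {subset x :: q <= x :: p}.
Proof.
elim: p x => [|z p IH] x /=.
  by move=> _; rewrite inE => /eqP ->; exists [::]; [by rewrite /= eqxx | by []].
case/andP=> exz hp; rewrite inE; case: (eqVneq y x) => [->|yx] /= hy.
  by exists [::]; [rewrite /= eqxx | move=> v; rewrite inE => /eqP ->; rewrite mem_head].
have [q /andP[hq hl] hs] := IH z hp hy.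
exists (z :: q); first by rewrite /= exz hq.
move=> v; rewrite inE => /orP[/eqP ->|hv]; first by rewrite mem_head.
by rewrite inE (hs v hv) orbT.
Qed.

Lemma aug_anti d (GP : rel 'I_d) (I : {set 'I_d}) : acyclic GP ->
  forall u v, aug GP I u v -> aug GP I v u -> False.
Proof.
move=> aP [a|] [b|] //= h1 h2.
by have := aP _ _ h1; rewrite (connect1 h2).
Qed.

Lemma None_notin d (Z : {set 'I_d}) : None \notin Some @: Z.
Proof. by apply/imsetP => -[z _]. Qed.

Lemma aug_path d (GP : rel 'I_d) (I : {set 'I_d}) k q : k \in I -> path GP k q ->
  path (aug GP I) None (Some k :: map Some q).
Proof. by move=> kI hq; rewrite /= kI path_map. Qed.

Lemma dir_case d (GP : rel 'I_d) (I Z : {set 'I_d}) k q X : acyclic GP -> k \in I ->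
  path GP k q -> last k q = X -> (forall v, v \in k :: q -> v \notin Z) ->
  d_connected (aug GP I) (Some @: Z) None (Some X).
Proof.
move=> aP kI hq hl hZ.
have Hp := aug_path kI hq.
have -> : Some X = last None (Some k :: map Some q) by rewrite /= last_map hl.
case: (shortenP Hp) => p' Hp' Hu' Hsub.
exists p'; apply: (dir_dcp (aug_anti aP)) => // v.
rewrite inE => /orP[/eqP ->|/Hsub]; first exact: None_notin.
rewrite -map_cons => /mapP[u hu ->].
by rewrite mem_imset ?hZ //; move=> a b [].
Qed.

Lemma col_case d (GP : rel 'I_d) (I Z : {set 'I_d}) k q y : acyclic GP -> k \in I ->
  path GP k q -> last k q \in Z ->
  (forall v, v \in k :: q -> v != last k q -> v \notin Z) ->
  GP y (last k q) -> y \notin Z -> y \notin k :: q ->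
  d_connected (aug GP I) (Some @: Z) None (Some y).
Proof.
move=> aP kI hq hb hZ gy yZ yq.
have Hp := aug_path kI hq.
have el : Some (last k q) = last None (Some k :: map Some q) by rewrite /= last_map.
have injS : injective (@Some 'I_d) by move=> a b [].
case: (shortenP Hp) el => p' Hp' Hu' Hsub el.
exists (rcons p' (Some y)); apply: (col_dcp (aug_anti aP)) => //.
- rewrite -rcons_cons rcons_uniq Hu' andbT inE negb_or /=.
  apply/negP => /Hsub; rewrite -map_cons => /mapP[u hu [eu]].
  by rewrite eu hu in yq.
- exact: None_notin.
- by rewrite mem_imset.
- by rewrite -el mem_imset.
- move=> v; rewrite inE => /orP[/eqP ->|/Hsub]; first by rewrite None_notin.
  rewrite -map_cons => /mapP[u hu ->]; rewrite -el => hne.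
  rewrite mem_imset //; apply: (hZ _ hu); apply/negP => /eqP eu; move/negP: hne; apply; by rewrite eu.
- by rewrite -el.
Qed.

Theorem lemma18 (R : realType) (d : nat)
  (GP GQ : rel 'I_d) (fP fQ : 'I_d -> ('I_d -> R) -> R)
  (I : {set 'I_d}) (g : 'I_d -> ('I_d -> R) -> R) (i j : 'I_d) :
  (* (P, G_P) and (Q, G_Q) are causal graphical models *)
  acyclic GP -> acyclic GQ ->
  mechanisms GP fP -> mechanisms GQ fQ ->
  (* same skeleton *)
  (forall a b, adjr GP a b = adjr GQ a b) ->
  (* flipped edge: X_i -> X_j in G_Q, X_j -> X_i in G_P *)
  GQ i j -> GP j i ->
  (* P^e generated from (P, G_P) with target set I *)
  mechanisms GP g ->
  (forall k, k \in I ->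
     cond_differs (joint (intervene fP g I)) (joint fP) k (pa GP k)) ->
  (* faithfulness of P to G_P *)
  (forall A B Z : {set 'I_d}, [disjoint A & B] -> [disjoint A & Z] -> [disjoint B & Z] ->
     cond_indep (joint fP) A B Z -> d_separated GP A B Z) ->
  (* faithfulness to the augmented DAG *)
  (forall (X : 'I_d) (Z : {set 'I_d}), X \notin Z ->
     d_connected (aug GP I) (Some @: Z) None (Some X) ->
     cond_differs (joint (intervene fP g I)) (joint fP) X Z) ->
  (unblocked GP I (pa GQ j :\ i) i ->
     cond_differs (joint (intervene fP g I)) (joint fP) j (pa GQ j)) /\
  (unblocked GP I (pa GQ i) j ->
     cond_differs (joint (intervene fP g I)) (joint fP) i (pa GQ i)).
Proof.
move=> aP aQ _ _ _ Qij Pji _ _ _ faith.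
have nself a : a \notin pa GQ a.
  by rewrite inE; apply/negP => h; have := aQ _ _ h; rewrite connect0.
have ij : i \in pa GQ j by rewrite inE.
have ji : j \notin pa GQ i.
  by rewrite inE; apply/negP => h; have := aQ _ _ Qij; rewrite (connect1 h).
split.
- case=> k kI H; apply: faith; first exact: nself.
  have [s0 [Hs0 Hl Hall]] : exists s0, [/\ path GP k s0, last k s0 = i &
      forall v, v \in k :: s0 -> v \notin pa GQ j :\ i].
    case: H => [->|[s /and3P[hp /eqP hl /allP ha]]].
      by exists [::]; split => // v; rewrite inE => /eqP ->; rewrite !inE eqxx.
    by exists s.
  case: (boolP (j \in k :: s0)) => hj.
    have [q /andP[hq /eqP hlq] hsub] := prefix Hs0 hj.
    apply: (dir_case aP kI hq hlq) => v hv.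
    case: (eqVneq v i) => [evi|vi].
      have := aP _ _ Pji; by rewrite -evi -hlq (conn_last hq hv).
    by have := Hall _ (hsub _ hv); rewrite !inE vi.
  apply: (col_case aP kI Hs0); rewrite ?Hl //.
  by move=> v hv vi; have := Hall _ hv; rewrite !inE vi.
- case=> k kI H; apply: faith; first exact: nself.
  have [s0 [Hs0 Hl Hall]] : exists s0, [/\ path GP k s0, last k s0 = j &
      forall v, v \in k :: s0 -> v \notin pa GQ i].
    case: H => [->|[s /and3P[hp /eqP hl /allP ha]]].
      by exists [::]; split => // v; rewrite inE => /eqP ->.
    by exists s.
  apply: (dir_case (q := rcons s0 i) aP kI).
  - by rewrite rcons_path Hs0 Hl Pji.
  - by rewrite last_rcons.
  move=> v; rewrite -rcons_cons mem_rcons inE => /orP[/eqP ->|]; first exact: nself.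
  exact: Hall.
Qed.
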